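(* Let $P\subseteq S_n$ be a permutation array with Hamming distance $d$, and let $m\in\{1,\ldots,n-1\}$. Suppose that for any $\sigma,\tau\in P$ the disjoint cycle decomposition of $\sigma^{-1}\tau$ has no cycle of odd length $\ell\in\{3,\ldots,2m+1\}$. Then (1) ${\rm hd}(P^{{\sf CT}^m})\ge d-2m$, and (2) if $d>2m$ then $|P^{{\sf CT}^m}|=|P|$.
   Context: $S_n$ is the symmetric group on $\{0,1,\ldots,n-1\}$, with composition from left to right: $\tau\sigma(x):=\sigma(\tau(x))$. A permutation array is a non-empty subset $P\subseteq S_n$; ${\rm hd}(\sigma,\tau)=|\{x:\sigma(x)\neq\tau(x)\}|$ and the Hamming distance of $P$ is ${\rm hd}(P)=\min\{{\rm hd}(\sigma,\tau):\sigma,\tau\in P,\ \sigma\neq\tau\}$. The contraction of $\sigma\in S_n$ is $\sigma^{\sf CT}\in S_{n-1}$ (on $\{0,\ldots,n-2\}$) defined by $\sigma^{\sf CT}(x)=\sigma(n-1)$ if $x=\sigma^{-1}(n-1)$ and $\sigma^{\sf CT}(x)=\sigma(x)$ otherwise (i.e. delete $n-1$ from the cycle notation). For $1\le m\le n-1$, $\sigma^{{\sf CT}^m}=(\sigma^{{\sf CT}^{m-1}})^{\sf CT}\in S_{n-m}$ with $\sigma^{{\sf CT}^1}=\sigma^{\sf CT}$, and $P^{{\sf CT}^m}=\{\sigma^{{\sf CT}^m}:\sigma\in P\}$. *)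

(* Defs.v *)
From mathcomp Require Import all_boot all_order all_fingroup.
Set Implicit Arguments.
Unset Strict Implicit.
Unset Printing Implicit Defensive.
Local Open Scope group_scope.

(* Permutations of {0,...,n-1} are {perm 'I_n}; mathcomp's product
   (s * t) x = t (s x) is exactly the paper's left-to-right composition. *)

Definition hd (n : nat) (s t : {perm 'I_n}) : nat := #|[set x | s x != t x]|.

(* Hamming distance of a permutation array: minimum over distinct pairs.
   Convention: if P has fewer than two elements the value is n. *)
Definition hdP (n : nat) (P : {set {perm 'I_n}}) : nat :=
  \big[minn/n]_(s in P) \big[minn/n]_(t in P | t != s) hd s t.

(* Contraction S_{j+1} -> S_j.  sigma^CT(x) = sigma(j) if sigma(x) = j,
   sigma(x) otherwise.  We compute it as the restriction to {0..j-1} of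
   sigma * (j sigma(j)), which fixes j. *)
Definition ct_aux (j : nat) (s : {perm 'I_j.+1}) : {perm 'I_j.+1} :=
  s * tperm (s ord_max) ord_max.

Definition ct_fun (j : nat) (s : {perm 'I_j.+1}) (x : 'I_j) : 'I_j :=
  insubd x (val (ct_aux s (widen_ord (leqnSn j) x))).

Lemma ct_aux_max j (s : {perm 'I_j.+1}) : ct_aux s ord_max = ord_max.
Proof. by rewrite /ct_aux permM tpermL. Qed.

Lemma ct_fun_val j (s : {perm 'I_j.+1}) (x : 'I_j) :
  val (ct_fun s x) = val (ct_aux s (widen_ord (leqnSn j) x)).
Proof.
rewrite /ct_fun val_insubd.
set y := ct_aux s _.
have : y != ord_max.
  apply: contraNneq (_ : widen_ord (leqnSn j) x != ord_max) => [hy|].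
    by apply/eqP; apply: (perm_inj (s := ct_aux s)); rewrite ct_aux_max.
  by rewrite -val_eqE /= neq_ltn ltn_ord.
have := ltn_ord y; rewrite ltnS leq_eqVlt -val_eqE /= => /orP[->//|-> _ //].
Qed.

Lemma ct_fun_inj j (s : {perm 'I_j.+1}) : injective (ct_fun s).
Proof.
move=> a b /(congr1 val); rewrite !ct_fun_val => /val_inj/perm_inj.
by move/(congr1 val) => /= /val_inj.
Qed.

Definition ct_succ (j : nat) (s : {perm 'I_j.+1}) : {perm 'I_j} :=
  perm (@ct_fun_inj j s).

(* Contraction S_j -> S_{j-1} (trivial for j = 0, never used there). *)
Definition ct (j : nat) : {perm 'I_j} -> {perm 'I_j.-1} :=
  match j return {perm 'I_j} -> {perm 'I_j.-1} with
  | 0 => fun _ => 1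
  | j'.+1 => @ct_succ j'
  end.

Fixpoint ctm (n m : nat) : {perm 'I_n} -> {perm 'I_(n - m)} :=
  match m return {perm 'I_n} -> {perm 'I_(n - m)} with
  | 0 => fun s => cast_perm (esym (subn0 n)) s
  | m'.+1 => fun s => cast_perm (esym (subnS n m')) (ct (ctm m' s))
  end.

Definition ctm_set (n m : nat) (P : {set {perm 'I_n}}) : {set {perm 'I_(n - m)}} :=
  [set ctm m s | s in P].

(* Main.v *)
Require Import Defs.
From mathcomp Require Import all_boot all_order all_fingroup.
From mathcomp Require Import zify.
Set Implicit Arguments. Unset Strict Implicit. Unset Printing Implicit Defensive.
Local Open Scope group_scope.


Lemma cards_disjU (U : finType) (X Y : {set U}) :
  (forall x, x \in X -> x \notin Y) -> #|X :|: Y| = #|X| + #|Y|.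
Proof.
move=> d; rewrite cardsU; suff ->: X :&: Y = set0 by rewrite cards0 subn0.
apply/setP => x; rewrite !inE; case: (boolP (x \in X)) => //= /d.
by move/negbTE.
Qed.

Section Orb.
Variable T : finType.
Implicit Types (h g : {perm T}) (a b x y z : T).

Lemma porbit_closed h x (X : {set T}) :
  x \in X -> (forall y, y \in X -> h y \in X) -> porbit h x \subset X.
Proof.
move=> xX cl; apply/subsetP => y /porbitP[i ->]; rewrite permX.
by elim: i => //= i IH; apply: cl.
Qed.

Lemma porbit_step h x y : y \in porbit h x -> h y \in porbit h x.
Proof.
by move=> /porbitP[i ->]; rewrite -permM -expgSr mem_porbit.
Qed.

Lemma porbit_same h x y : y \in porbit h x -> porbit h y = porbit h x.
Proof. by move=> H; apply/eqP; rewrite eq_porbit_mem. Qed.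

Lemma porbit_fix h x : h x = x -> porbit h x = [set x].
Proof.
move=> hx; apply/setP => y; rewrite inE; apply/porbitP/eqP => [[i ->]|->].
  by rewrite permX_fix.
by exists 0; rewrite expg0 perm1.
Qed.

Lemma porbit_hx h x : porbit h (h x) = porbit h x.
Proof. by apply: porbit_same; apply: porbit_step; apply: porbit_id. Qed.

Lemma tperm_back h a b : h * tperm a b * tperm a b = h.
Proof. by rewrite -mulgA tperm2 mulg1. Qed.

Lemma porbit_out_sub h a b x : a \notin porbit h x -> b \notin porbit h x ->
  porbit (h * tperm a b) x \subset porbit h x.
Proof.
move=> ha hb; apply: porbit_closed; first exact: porbit_id.
move=> y yX; rewrite permM; have hy := porbit_step yX.
rewrite tpermD //; first by apply: contraNneq ha => ->.
by apply: contraNneq hb => ->.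
Qed.

Lemma porbit_out h a b x : a \notin porbit h x -> b \notin porbit h x ->
  porbit (h * tperm a b) x = porbit h x.
Proof.
move=> ha hb; have S1 := porbit_out_sub ha hb.
apply/eqP; rewrite eqEsubset S1 /=.
rewrite -{1}(tperm_back h a b); apply: porbit_out_sub.
  by apply: contra ha; apply/subsetP.
by apply: contra hb; apply/subsetP.
Qed.

Lemma porbit_union_sub h a b :
  porbit (h * tperm a b) a :|: porbit (h * tperm a b) b \subset
  porbit h a :|: porbit h b.
Proof.
have cl: forall y, y \in porbit h a :|: porbit h b ->
    (h * tperm a b) y \in porbit h a :|: porbit h b.
  move=> y; rewrite permM !inE => /orP[] /porbit_step hy;
  (case: tpermP => [_|_|_ _]; rewrite ?porbit_id ?orbT ?hy ?orbT //).
by rewrite subUset !porbit_closed // !inE porbit_id ?orbT.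
Qed.

Lemma porbit_union h a b :
  porbit (h * tperm a b) a :|: porbit (h * tperm a b) b =
  porbit h a :|: porbit h b.
Proof.
apply/eqP; rewrite eqEsubset porbit_union_sub /=.
by rewrite -{1 2}(tperm_back h a b) porbit_union_sub.
Qed.


Lemma in_porbits h y : porbit h y \in porbits h.
Proof. exact: imset_f. Qed.

Lemma porbit_out' h a b y : a \notin porbit (h * tperm a b) y ->
  b \notin porbit (h * tperm a b) y -> porbit h y = porbit (h * tperm a b) y.
Proof.
move=> ha hb; have := porbit_out ha hb; by rewrite tperm_back.
Qed.

Lemma porbits_tperm h a b :
  porbits (h * tperm a b) = (porbits h :\ porbit h a :\ porbit h b) :|:
      [set porbit (h * tperm a b) a; porbit (h * tperm a b) b].
Proof.
set h' := h * tperm a b.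
apply/setP => C; rewrite !inE; apply/idP/idP.
  case/imsetP => y _ ->.
  case: (boolP (a \in porbit h' y)) => ay.
    by rewrite -(porbit_same ay) eqxx orbT.
  case: (boolP (b \in porbit h' y)) => by_.
    by rewrite -(porbit_same by_) eqxx !orbT.
  have E := porbit_out' ay by_; rewrite -E.
  apply/orP; left; rewrite in_porbits andbT; apply/andP; split.
    by apply/negP => /eqP hE; move: by_; rewrite /h' -E hE porbit_id.
  by apply/negP => /eqP hE; move: ay; rewrite /h' -E hE porbit_id.
case/orP => [/and3P[nb na /imsetP[y _ Cy]]|/orP[]/eqP->]; last 2 first.
- exact: in_porbits.
- exact: in_porbits.
subst C.
have ay : a \notin porbit h y.
  by apply: contra na => H; rewrite (porbit_same H).
have by_ : b \notin porbit h y.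
  by apply: contra nb => H; rewrite (porbit_same H).
by rewrite -(porbit_out ay by_) in_porbits.
Qed.

Lemma card_porbits_tperm h a b :
  #|porbits (h * tperm a b)| + (a \notin porbit h b).*2 = #|porbits h| + (a != b).
Proof.
by rewrite -porbitsV invMg tpermV -(porbitV h b) porbits_mul_tperm porbitsV.
Qed.

Lemma porbit_notin_rest h a b :
  porbit (h * tperm a b) a \notin (porbits h :\ porbit h a :\ porbit h b).
Proof.
rewrite !inE; apply/negP => /and3P[_ na /imsetP[w _ E]].
have: a \in porbit h w by rewrite -E porbit_id.
move=> /porbit_same E2; by rewrite E -E2 eqxx in na.
Qed.

Lemma porbit_notin_rest' h a b :
  porbit (h * tperm a b) b \notin (porbits h :\ porbit h a :\ porbit h b).
Proof.
rewrite !inE; apply/negP => /and3P[nb _ /imsetP[w _ E]].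
have: b \in porbit h w by rewrite -E porbit_id.
move=> /porbit_same E2; by rewrite E -E2 eqxx in nb.
Qed.

Lemma card_porbits_split h a b :
  #|porbits (h * tperm a b)| =
  #|porbits h :\ porbit h a :\ porbit h b| +
  #|[set porbit (h * tperm a b) a; porbit (h * tperm a b) b]|.
Proof.
rewrite {1}porbits_tperm cards_disjU //.
move=> C hR; rewrite !inE; apply/negP => /orP[]/eqP E; subst C.
  by move: hR; apply/negP; apply: porbit_notin_rest.
by move: hR; apply/negP; apply: porbit_notin_rest'.
Qed.

Lemma tperm_split h a b : a != b -> b \in porbit h a ->
  porbit (h * tperm a b) a != porbit (h * tperm a b) b.
Proof.
move=> ab ba; apply/negP => /eqP E.
have := card_porbits_tperm h a b; rewrite card_porbits_split E setUid cards1.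
have Eb : porbit h b = porbit h a by apply: porbit_same.
rewrite Eb porbit_id ab /= setDDl setUid addn0.
have := cardsD1 (porbit h a) (porbits h); rewrite in_porbits /=.
lia.
Qed.

Lemma tperm_merge h a b : b \notin porbit h a ->
  porbit (h * tperm a b) a = porbit (h * tperm a b) b.
Proof.
move=> ba; apply/eqP; apply/negPn/negP => E.
have ab : a != b by apply: contraNneq ba => <-; rewrite porbit_id.
have := card_porbits_tperm h a b; rewrite card_porbits_split cards2 E.
rewrite porbit_sym ba ab /=.
have := cardsD1 (porbit h a) (porbits h); rewrite in_porbits /=.
have := cardsD1 (porbit h b) (porbits h :\ porbit h a).
rewrite !inE in_porbits andbT.
have -> : (porbit h b != porbit h a).
  by apply: contra ba => /eqP <-; rewrite porbit_id.
move=> /= -> ->; lia.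
Qed.

Lemma notin_rest2 h a b (C : {set T}) :
  C \in [set porbit (h * tperm a b) a; porbit (h * tperm a b) b] ->
  C \notin porbits h :\ porbit h a :\ porbit h b.
Proof.
case/set2P => ->.
  exact: porbit_notin_rest.
exact: porbit_notin_rest'.
Qed.

End Orb.


Close Scope group_scope.
Section Pot.
Variable T : finType.
Implicit Types (P Q S N Old New : {set {set T}}).

Definition wsum (f : {set T} -> nat) P := \sum_(C in P) f C.
Definition fixc P := wsum (fun C => (#|C| == 1%N) : nat) P.
Definition cost P := wsum (fun C => (#|C|)./2) P.
Definition goodc (C : {set T}) := odd #|C| && (2 < #|C|).
Definition valid P r S := [&& S \subset P, [forall C in S, goodc C] & cost S <= r].

Lemma wsum_split f X Y : wsum f X = wsum f (X :&: Y) + wsum f (X :\: Y).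
Proof. exact: big_setID. Qed.

Lemma wsum_card X : wsum (fun _ => 1%N) X = #|X|.
Proof. by rewrite /wsum sum1_card. Qed.

Lemma pot_global P P' Old New (r : nat) S' :
  Old \subset P -> P' = (P :\: Old) :|: New ->
  (forall C, C \in New -> C \notin P :\: Old) ->
  (forall N, N \subset New -> (forall C, C \in N -> goodc C) ->
     exists O' : {set {set T}}, [/\ O' \subset Old, (forall C, C \in O' -> goodc C),
       fixc New + #|N| <= fixc Old + 2 + #|O'| & cost O' <= cost N + 1]) ->
  valid P' r S' -> exists S, valid P r.+1 S /\ fixc P' + #|S'| <= fixc P + 2 + #|S|.
Proof.
move=> sOP EP' dN loc /and3P[sS' /forall_inP gS' cS'].
have [O' [sO' gO' ineq cO']] := loc (S' :&: New) (subsetIr _ _)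
   (fun C hC => gS' C (subsetP (subsetIl _ _) C hC)).
have [S0 eS0] : exists S0, S0 = S' :\: New by eexists.
have sS0 : S0 \subset P :\: Old.
  apply/subsetP => C; rewrite eS0 !inE => /andP[nN CS].
  by have := subsetP sS' C CS; rewrite EP' !inE (negbTE nN) orbF.
have dis : forall C, C \in S0 -> C \notin O'.
  move=> C /(subsetP sS0); rewrite inE => /andP[nO _].
  by apply: contra nO => /(subsetP sO').
exists (S0 :|: O').
have E1 : (S0 :|: O') :&: Old = O'.
  apply/setP => C; rewrite !inE; case: (boolP (C \in O')) => hO /=.
    by rewrite (subsetP sO') ?orbT.
  rewrite orbF; apply/negP => /andP[/(subsetP sS0)].
  by rewrite inE => /andP[/negP nn _].
have E2 : (S0 :|: O') :\: Old = S0.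
  apply/setP => C; rewrite inE [C \in S0 :|: _]inE.
  case: (boolP (C \in O')) => hO /=.
    rewrite (subsetP sO') //=; apply/esym/negP => /dis; by rewrite hO.
  rewrite orbF; case: (boolP (C \in S0)) => h; rewrite ?andbF //.
  by have := subsetP sS0 C h; rewrite inE => /andP[-> _].
have EN : P' :&: New = New.
  by apply/setIidPr; rewrite EP'; apply: subsetUr.
have EPN : P' :\: New = P :\: Old.
  apply/setP => C; rewrite EP' !inE.
  case: (boolP (C \in New)) => hN /=; last by rewrite orbF.
  by apply/esym; apply/negP => hh; move: (dN C hN); rewrite inE hh.
have EO : P :&: Old = Old by apply/setIidPr.
have ES' : S' :\: New = S0 by rewrite eS0.
have fP' := wsum_split (fun C => (#|C| == 1%N) : nat) P' New.
have fP := wsum_split (fun C => (#|C| == 1%N) : nat) P Old.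
have cS := wsum_split (fun C => (#|C|)./2) (S0 :|: O') Old.
have cS'2 := wsum_split (fun C => (#|C|)./2) S' New.
have kS' := wsum_split (fun _ => 1%N) S' New.
rewrite !wsum_card in kS'.
rewrite EN EPN in fP'; rewrite EO in fP; rewrite E1 E2 in cS; rewrite ES' in cS'2 kS'.
rewrite /fixc fP' fP cards_disjU // kS'.
split; last by move: ineq; rewrite /fixc; lia.
apply/and3P; split.
- rewrite subUset; apply/andP; split.
    by apply: subset_trans sS0 (subsetDl _ _).
  exact: subset_trans sO' sOP.
- apply/forall_inP => C; rewrite inE => /orP[hC|hC]; last exact: gO'.
  by apply: gS'; move: hC; rewrite eS0 inE => /andP[].
- by move: cO' cS' ; rewrite /cost cS cS'2; lia.
Qed.

Lemma wsum0 f : wsum f set0 = 0.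
Proof. by rewrite /wsum big_set0. Qed.

Lemma wsum1 f X : wsum f [set X] = f X.
Proof. by rewrite /wsum big_set1. Qed.

Lemma wsum2 f X Y : X != Y -> wsum f [set X; Y] = f X + f Y.
Proof. by move=> h; rewrite /wsum big_setU1 ?inE // big_set1. Qed.

Lemma wsum3 f X Y Z : X != Y -> X != Z -> Y != Z ->
  wsum f [set X; Y; Z] = f X + f Y + f Z.
Proof.
move=> h1 h2 h3; rewrite /wsum setUC big_setU1; last by rewrite !inE !(eq_sym Z) negb_or h2.
have := wsum2 f h1; rewrite /wsum => ->; rewrite /= addnC. done.
Qed.

Lemma wsum_sub f N New : N \subset New ->
  wsum f N = wsum (fun C => (C \in N) * f C) New.
Proof.
move=> sN; rewrite /wsum big_mkcond [in RHS]big_mkcond /=.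
apply: eq_bigr => C _; case: (boolP (C \in N)) => h; last by rewrite mul0n; case: ifP.
by rewrite (subsetP sN) // mul1n.
Qed.

Lemma goodc1 z : goodc [set z] = false.
Proof. by rewrite /goodc cards1. Qed.

Lemma loc_remove (O O' : {set T}) (z : T) :
  O' != [set z] -> #|O| = #|O'|.+1 ->
  forall N, N \subset [set O'; [set z]] -> (forall C, C \in N -> goodc C) ->
     exists O'' : {set {set T}}, [/\ O'' \subset [set O], (forall C, C \in O'' -> goodc C),
       fixc [set O'; [set z]] + #|N| <= fixc [set O] + 2 + #|O''| &
       cost O'' <= cost N + 1].
Proof.
move=> nz cO N sN gN; exists set0; split.
- exact: sub0set.
- by move=> C; rewrite inE.
- rewrite cards0 /fixc wsum1 wsum2 // cards1 -wsum_card (wsum_sub _ sN) wsum2 //.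
  have : [set z] \notin N by apply/negP => /gN; rewrite goodc1.
  move/negbTE => ->; case: (boolP (O' \in N)) => h.
    by have := gN _ h; rewrite /goodc cO; case/andP => _; lia.
  by rewrite cO; lia.
- by rewrite /cost wsum0.
Qed.

Lemma loc_merge (O Q M : {set T}) (z : T) :
  M != [set z] -> O != Q -> (#|M|.+1 = #|O| + #|Q|)%N -> 2 <= #|O| -> 1 <= #|Q| ->
  forall N, N \subset [set M; [set z]] -> (forall C, C \in N -> goodc C) ->
     exists O'' : {set {set T}}, [/\ O'' \subset [set O; Q], (forall C, C \in O'' -> goodc C),
       fixc [set M; [set z]] + #|N| <= fixc [set O; Q] + 2 + #|O''| &
       cost O'' <= cost N + 1].
Proof.
move=> nz nOQ cM cO cQ N sN gN; exists set0; split.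
- exact: sub0set.
- by move=> C; rewrite inE.
- rewrite cards0 /fixc !wsum2 // cards1 -wsum_card (wsum_sub _ sN) wsum2 //.
  have : [set z] \notin N by apply/negP => /gN; rewrite goodc1.
  move/negbTE => ->; case: (O \in N); case: (M \in N) => /=; lia.
- by rewrite /cost wsum0.
Qed.

Lemma loc_split3 (O A B : {set T}) (z : T) :
  A != B -> A != [set z] -> B != [set z] -> (#|O| = #|A| + #|B| + 1)%N ->
  1 <= #|A| -> 1 <= #|B| ->
  forall N, N \subset [set A; B; [set z]] -> (forall C, C \in N -> goodc C) ->
     exists O'' : {set {set T}}, [/\ O'' \subset [set O], (forall C, C \in O'' -> goodc C),
       fixc [set A; B; [set z]] + #|N| <= fixc [set O] + 2 + #|O''| &
       cost O'' <= cost N + 1].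
Proof.
move=> nAB nA nB cO cA cB N sN gN.
have zN : [set z] \notin N by apply/negP => /gN; rewrite goodc1.
have kN : #|N| = (A \in N) + (B \in N).
  by rewrite -wsum_card (wsum_sub _ sN) wsum3 // (negbTE zN) !muln1 addn0.
have cN : cost N = (A \in N) * (#|A|)./2 + (B \in N) * (#|B|)./2.
  by rewrite /cost (wsum_sub _ sN) wsum3 // (negbTE zN) mul0n addn0.
have fN : fixc [set A; B; [set z]] = (#|A| == 1%N) + (#|B| == 1%N) + 1.
  by rewrite /fixc wsum3 // cards1.
have fO : fixc [set O] = 0 by rewrite /fixc wsum1; apply/eqP; rewrite eqb0; lia.
have gA : A \in N -> odd #|A| && (2 < #|A|) by move/gN.
have gB : B \in N -> odd #|B| && (2 < #|B|) by move/gN.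
rewrite fN fO kN cN.
case: (boolP (((A \in N) || (#|A| == 1%N)) && ((B \in N) || (#|B| == 1%N)))) => hc.
  exists [set O]; split.
  - exact: subxx.
  - move=> C; rewrite inE => /eqP ->; rewrite /goodc cO.
    case/andP: hc => /orP[hA|/eqP hA] /orP[hB|/eqP hB].
    + by move: (gA hA) (gB hB); lia.
    + by move: (gA hA); rewrite hB; lia.
    + by move: (gB hB); rewrite hA; lia.
    + by rewrite hA hB.
  - rewrite cards1; case: (A \in N) gA; case: (B \in N) gB => //= gB gA; lia.
  - rewrite /cost wsum1 cO.
    case/andP: hc => /orP[hA|/eqP hA] /orP[hB|/eqP hB].
    + by rewrite hA hB; move: (gA hA) (gB hB); lia.
    + rewrite hA hB; move: (gA hA); case: (B \in N); lia.
    + rewrite hA hB; move: (gB hB); case: (A \in N); lia.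
    + by rewrite hA hB; case: (A \in N); case: (B \in N).
exists set0; split.
- exact: sub0set.
- by move=> C; rewrite inE.
- rewrite cards0; move: hc; case: (A \in N) gA; case: (B \in N) gB => /= gB gA; lia.
- by rewrite /cost wsum0.
Qed.

End Pot.
Local Open Scope group_scope.


Section Step.
Variable T : finType.
Implicit Types (g h : {perm T}) (x y z c : T).

Definition concl (P P' : {set {set T}}) (r : nat) (S' : {set {set T}}) :=
  exists S, valid P r.+1 S /\ (fixc P' + #|S'| <= fixc P + 2 + #|S|)%N.

Definition gstep g c z := g * tperm (g c) (g z) * tperm (g c) z.

Lemma porbit_disj g x y w : porbit g x != porbit g y ->
  w \in porbit g x -> w \notin porbit g y.
Proof.
move=> ne wx; apply/negP => wy; move: ne.
by rewrite -(porbit_same wx) -(porbit_same wy) eqxx.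
Qed.

Lemma porbits_mem g (C : {set T}) x : C \in porbits g -> x \in C -> C = porbit g x.
Proof. by case/imsetP => w _ -> /porbit_same ->. Qed.

Lemma notin_rest_of g (Old : {set {set T}}) (C : {set T}) x :
  x \in C -> porbit g x \in Old -> C \notin porbits g :\: Old.
Proof.
move=> xC xO; rewrite inE; apply/negP => /andP[nO /porbits_mem/(_ xC) E].
by rewrite E xO in nO.
Qed.

Lemma card_orb_disj g x y : porbit g x != porbit g y ->
  #|porbit g x :|: porbit g y| = (#|porbit g x| + #|porbit g y|)%N.
Proof. by move=> ne; apply: cards_disjU => w; apply: porbit_disj. Qed.

Lemma card_porbit_ge1 g x : (1 <= #|porbit g x|)%N.
Proof. by rewrite lt0n card_porbit_neq0. Qed.

Lemma step_fixed g c z r S' : g z = z ->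
  valid (porbits (gstep g c z)) r S' -> concl (porbits g) (porbits (gstep g c z)) r S'.
Proof.
move=> gz; rewrite /gstep gz tperm_back => /and3P[h1 h2 h3].
exists S'; split; last by rewrite addnAC leq_addr.
by rewrite /valid h1 h2 (leq_trans h3).
Qed.

Lemma step_cz g z r S' : g z != z ->
  valid (porbits (gstep g z z)) r S' -> concl (porbits g) (porbits (gstep g z z)) r S'.
Proof.
move=> nz; rewrite /gstep tperm1 mulg1.
set v := g z; set g1 := g * tperm v z => V.
have Ov : porbit g v = porbit g z := porbit_hx g z.
have zv : z \in porbit g v by rewrite Ov porbit_id.
have sp := tperm_split nz zv.
have g1z : g1 z = z by rewrite permM tpermL.
have Z1 : porbit g1 z = [set z] := porbit_fix g1z.
have U := porbit_union g v z.
rewrite Ov setUid in U.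
apply: (pot_global (Old := [set porbit g z]) (New := [set porbit g1 v; porbit g1 z]) _ _ _ _ V).
- by rewrite sub1set in_porbits.
- by rewrite porbits_tperm Ov setDDl setUid.
- by move=> C /notin_rest2; rewrite Ov setDDl setUid.
- rewrite Z1; apply: loc_remove; first by rewrite -Z1.
  by rewrite -U card_orb_disj // Z1 cards1 addn1.
Qed.

Lemma step_same g c z r S' : g z != z -> c != z -> c \in porbit g z ->
  valid (porbits (gstep g c z)) r S' -> concl (porbits g) (porbits (gstep g c z)) r S'.
Proof.
move=> nz ncz cO; rewrite /gstep.
set u := g c; set v := g z; set g1 := g * tperm u v.
have uv : u != v by rewrite (inj_eq perm_inj).
have Ou : porbit g u = porbit g z by rewrite porbit_hx; apply: porbit_same.
have Ov : porbit g v = porbit g z := porbit_hx g z.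
have vu : v \in porbit g u by rewrite Ou -Ov porbit_id.
have spl := tperm_split uv vu; rewrite -/g1 in spl.
have U1 := porbit_union g u v; rewrite Ou Ov setUid -/g1 in U1.
have g1z : g1 z = u by rewrite permM tpermR.
have Az : porbit g1 z = porbit g1 u by rewrite -g1z porbit_hx.
have P1 : porbits g1 = (porbits g :\: [set porbit g z]) :|: [set porbit g1 u; porbit g1 v].
  by rewrite porbits_tperm Ou Ov setDDl setUid.
have nA : forall C, C \in [set porbit g1 u; porbit g1 v] -> C \notin porbits g :\: [set porbit g z].
  by move=> C /notin_rest2; rewrite Ou Ov setDDl setUid.
have cO1 : #|porbit g z| = (#|porbit g1 u| + #|porbit g1 v|)%N by rewrite -U1 card_orb_disj.
case: (eqVneq u z) => [uz|uz].
  rewrite uz tperm1 mulg1 => V.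
  have A1 : porbit g1 u = [set z] by rewrite -Az; apply: porbit_fix; rewrite g1z.
  apply: (pot_global (Old := [set porbit g z]) (New := [set porbit g1 v; porbit g1 u]) _ _ _ _ V).
  - by rewrite sub1set in_porbits.
    by rewrite P1 [[set porbit g1 u; _]]setUC.
  - by move=> C hC; apply: nA; move: hC; rewrite !inE orbC.
  - rewrite A1; apply: loc_remove; first by rewrite -A1 eq_sym.
    by rewrite cO1 A1 cards1.
move=> V.
set g2 := g1 * tperm u z.
have zA : z \in porbit g1 u by rewrite -Az porbit_id.
have spl2 := tperm_split uz zA; rewrite -/g2 in spl2.
have g2z : g2 z = z by rewrite permM g1z tpermL.
have Z2 : porbit g2 z = [set z] := porbit_fix g2z.
have U2 := porbit_union g1 u z; rewrite Az setUid -/g2 in U2.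
have P2 : porbits g2 = (porbits g1 :\: [set porbit g1 u]) :|: [set porbit g2 u; porbit g2 z].
  by rewrite porbits_tperm Az setDDl setUid.
have E : porbits g2 = (porbits g :\: [set porbit g z]) :|:
                      [set porbit g2 u; porbit g1 v; [set z]].
  apply/setP => C; rewrite P2 P1 -Z2 !inE.
  case: (eqVneq C (porbit g1 u)) => [->|hCA] /=.
    have := nA (porbit g1 u); rewrite !inE eqxx => /(_ isT) /negbTE ->.
    by rewrite (negbTE spl) /= orbF.
  by rewrite !orbA; congr (_ || _); rewrite -!orbA; congr (_ || _); rewrite orbC.
apply: (pot_global (Old := [set porbit g z]) (New := [set porbit g2 u; porbit g1 v; [set z]]) _ E _ _ V).
- by rewrite sub1set in_porbits.
- move=> C hC.
  have : C = porbit g2 u \/ C = porbit g1 v \/ C = [set z].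
    by move: hC; rewrite !inE -!orbA => /or3P[]/eqP; auto.
  case=> [->|[->|->]].
  + by apply: (notin_rest_of (x := u)); rewrite ?porbit_id ?Ou ?inE.
  + by apply: (notin_rest_of (x := v)); rewrite ?porbit_id ?Ov ?inE.
  + by apply: (notin_rest_of (x := z)); rewrite ?inE ?eqxx.
- apply: loc_split3.
  + apply/negP => /eqP E2; have := porbit_disj spl (porbit_id g1 u).
    by rewrite -E2 (porbit_id g2 u).
  + by rewrite -Z2.
  + apply/negP => /eqP E2; have := porbit_disj spl zA.
    by rewrite E2 inE eqxx.
  + by rewrite cO1 -U2 card_orb_disj // Z2 cards1 addnAC.
  + exact: card_porbit_ge1.
  + exact: card_porbit_ge1.
Qed.

Lemma step_merge g c z r S' : g z != z -> c \notin porbit g z ->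
  valid (porbits (gstep g c z)) r S' -> concl (porbits g) (porbits (gstep g c z)) r S'.
Proof.
move=> nz cO; rewrite /gstep.
set u := g c; set v := g z; set g1 := g * tperm u v.
have Ov : porbit g v = porbit g z := porbit_hx g z.
have Qu : porbit g u = porbit g c := porbit_hx g c.
have nu : u \notin porbit g v.
  apply: contra cO => /porbit_same; rewrite Qu Ov => <-; exact: porbit_id.
have QO : porbit g c != porbit g z.
  by apply: contra cO => /eqP <-; exact: porbit_id.
have nu' : v \notin porbit g u by rewrite porbit_sym.
have mrg := tperm_merge nu'; rewrite -/g1 in mrg.
have U1 := porbit_union g u v; rewrite -/g1 -mrg setUid Qu Ov in U1.
have P1 : porbits g1 = (porbits g :\: [set porbit g c; porbit g z]) :|: [set porbit g1 u].
  by rewrite porbits_tperm Qu Ov setDDl -/g1 -mrg setUid.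
have nM : porbit g1 u \notin porbits g :\: [set porbit g c; porbit g z].
  by have := porbit_notin_rest g u v; rewrite Qu Ov setDDl.
have g1z : g1 z = u by rewrite permM tpermR.
have Mz : porbit g1 z = porbit g1 u by rewrite -g1z porbit_hx.
have uz : u != z.
  by apply: contra nu => /eqP ->; rewrite Ov porbit_id.
move=> V.
set g2 := g1 * tperm u z.
have zM : z \in porbit g1 u by rewrite -Mz porbit_id.
have spl2 := tperm_split uz zM; rewrite -/g2 in spl2.
have g2z : g2 z = z by rewrite permM g1z tpermL.
have Z2 : porbit g2 z = [set z] := porbit_fix g2z.
have U2 := porbit_union g1 u z; rewrite Mz setUid -/g2 in U2.
have E : porbits g2 = (porbits g :\: [set porbit g z; porbit g c]) :|:
                      [set porbit g2 u; [set z]].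
  rewrite porbits_tperm Mz setDDl setUid -/g2 Z2 P1 [_ :|: [set porbit g1 u]]setUC setU1K //.
  by rewrite [[set porbit g z; _]]setUC.
apply: (pot_global (Old := [set porbit g z; porbit g c]) (New := [set porbit g2 u; [set z]]) _ E _ _ V).
- by rewrite subUset !sub1set !in_porbits.
- move=> C hC.
  have : C = porbit g2 u \/ C = [set z] by move: hC; rewrite !inE => /orP[]/eqP; auto.
  case=> [->|->].
  + by apply: (notin_rest_of (x := u)); rewrite ?porbit_id ?Qu ?inE ?eqxx ?orbT.
  + by apply: (notin_rest_of (x := z)); rewrite ?inE ?eqxx.
- apply: loc_merge.
  + by rewrite -Z2.
  + by rewrite eq_sym.
  + have := card_orb_disj QO; rewrite -U1 -U2 card_orb_disj // Z2 cards1; lia.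
  + have : [set z; v] \subset porbit g z.
      by rewrite subUset !sub1set porbit_id -Ov porbit_id.
    move/subset_leq_card; rewrite cards2 eq_sym nz //.
  + exact: card_porbit_ge1.
Qed.

End Step.


Section Iter.
Variable T : finType.
Implicit Types (s t g : {perm T}) (z : T).

Definition del z s : {perm T} := s * tperm (s z) z.

Lemma gstep_del s t z : (del z s)^-1 * del z t = gstep (s^-1 * t) (s z) z.
Proof.
rewrite /del /gstep invMg tpermV.
have gc : (s^-1 * t) (s z) = t z by rewrite permM permK.
rewrite !mulgA -(mulgA (tperm (s z) z)) [tperm (s z) z * (s^-1 * t)]conjgC tpermJ gc.
by [].
Qed.

Lemma step s t z r S' : valid (porbits ((del z s)^-1 * del z t)) r S' ->
  concl (porbits (s^-1 * t)) (porbits ((del z s)^-1 * del z t)) r S'.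
Proof.
rewrite gstep_del; set g := s^-1 * t; set c := s z.
case: (eqVneq (g z) z) => [gz|nz]; first exact: step_fixed.
case: (eqVneq c z) => [cz|ncz]; first by rewrite cz; apply: step_cz.
case: (boolP (c \in porbit g z)) => cO; first exact: step_same.
exact: step_merge.
Qed.

Definition Dl (zs : seq T) s := foldl (fun s z => del z s) s zs.

Lemma iter_pot zs s t : exists S, valid (porbits (s^-1 * t)) (size zs) S /\
  (fixc (porbits ((Dl zs s)^-1 * Dl zs t)) <=
     fixc (porbits (s^-1 * t)) + 2 * size zs + #|S|)%N.
Proof.
elim: zs s t => [|z zs IH] s t /=.
  exists set0; split; last by rewrite cards0 !addn0.
  by rewrite /valid sub0set /cost wsum0 andbT; apply/forall_inP => C; rewrite inE.
have [S1 [V1 H1]] := IH (del z s) (del z t).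
have [S [V H]] := step V1.
exists S; split => //.
move: H1 H; rewrite /Dl /=; lia.
Qed.

Lemma fixc_porbits g : fixc (porbits g) = #|[set x | g x == x]|.
Proof.
rewrite /fixc /wsum.
have -> : (\sum_(C in porbits g) ((#|C| == 1%N) : nat) =
   \sum_(C | (C \in porbits g) && (#|C| == 1%N)) 1)%N.
  by rewrite big_mkcondr /=; apply: eq_bigr => C _; case: eqP.
rewrite sum1dep_card.
have -> : [set C | (C \in porbits g) && (#|C| == 1%N)] = set1 @: [set x | g x == x].
  apply/setP => C; rewrite inE; apply/andP/imsetP.
    move=> [/imsetP[y _ ->] /cards1P[x Ex]].
    have yx : y = x by apply/set1P; rewrite -Ex porbit_id.
    subst y; exists x => //; rewrite inE; apply/eqP.
    by have := porbit_step (porbit_id g x); rewrite Ex => /set1P.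
  move=> [x]; rewrite inE => /eqP gx ->; split.
    by rewrite -(porbit_fix gx) in_porbits.
  by rewrite cards1.
by rewrite card_imset //; exact: set1_inj.
Qed.

Lemma hd_fix n (s t : {perm 'I_n}) :
  (hd s t + #|[set x | (s^-1 * t)%g x == x]| = n)%N.
Proof.
have -> : [set x | (s^-1 * t) x == x] = s @: [set x | s x == t x].
  apply/setP => y; rewrite inE; apply/idP/imsetP.
    move=> /eqP h; exists (s^-1 y); last by rewrite permKV.
    by rewrite inE permKV -permM h.
  move=> [x]; rewrite inE => /eqP h ->; by rewrite permM permK h.
rewrite card_imset; last exact: perm_inj.
rewrite /hd; have E := cardsC [set x | s x == t x]; rewrite card_ord in E; rewrite -[RHS]E addnC; congr (_ + _).
by apply: eq_card => x; rewrite !inE.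
Qed.

End Iter.

Lemma pair_bound n (zs : seq 'I_n) (s t : {perm 'I_n}) :
  (forall x, ~~ [&& odd #|porbit (s^-1 * t) x|, (3 <= #|porbit (s^-1 * t) x|)%N
       & (#|porbit (s^-1 * t) x| <= 2 * size zs + 1)%N]) ->
  (hd s t <= hd (Dl zs s) (Dl zs t) + 2 * size zs)%N.
Proof.
move=> hyp.
have [S [/and3P[sS /forall_inP gS cS] H]] := iter_pot zs s t.
have S0 : #|S| = 0%N.
  apply/eqP; rewrite cards_eq0; apply/eqP/setP => C; rewrite inE; apply/negP => CS.
  have /imsetP[x _ Cx] := subsetP sS C CS.
  have := hyp x; rewrite -Cx.
  have := gS C CS; rewrite /goodc => /andP[oC gC].
  have : (#|C|./2 <= size zs)%N.
    apply: leq_trans cS; rewrite /cost (wsum_split _ S [set C]).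
    have -> : S :&: [set C] = [set C].
      by apply/setIidPr; rewrite sub1set.
    by rewrite wsum1 leq_addr.
  have := odd_double_half #|C|; rewrite oC /= => hh h1 /negP; apply; rewrite gC /=.
  have aux : forall k m, (1 + k./2 * 2 = k -> k./2 <= m -> k <= 2 * m + 1)%N by move=> k m; lia.
  by apply: aux; [rewrite muln2; exact: hh | exact: h1].
rewrite S0 addn0 in H.
have E1 : (hd s t + fixc (porbits (s^-1 * t)) = n)%N by rewrite fixc_porbits; exact: hd_fix.
have E2 : (hd (Dl zs s) (Dl zs t) + fixc (porbits ((Dl zs s)^-1 * Dl zs t)) = n)%N.
  by rewrite fixc_porbits; exact: hd_fix.
have aux : forall a b c d m, (a + b = n -> c + d = n -> d <= b + 2 * m -> a <= c + 2 * m)%N.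
  by move=> *; lia.
exact: aux E1 E2 H.
Qed.


Definition pf j (s : {perm 'I_j}) (k : nat) : nat :=
  oapp (fun x : 'I_j => val (s x)) k (insub k).

Lemma pf_val j (s : {perm 'I_j}) (x : 'I_j) : pf s x = s x.
Proof. by rewrite /pf valK. Qed.

Lemma pf_ge j (s : {perm 'I_j}) k : (j <= k)%N -> pf s k = k.
Proof. by move=> h; rewrite /pf insubN // -leqNgt. Qed.

Lemma card_count j (P : pred 'I_j) : #|[set x | P x]| = count P (enum 'I_j).
Proof.
rewrite cardsE cardE /enum_mem size_filter -enumT.
by rewrite filter_predT.
Qed.

Lemma hd_count j (s t : {perm 'I_j}) :
  hd s t = count (fun k => pf s k != pf t k) (iota 0 j).
Proof.
rewrite /hd card_count -val_enum_ord count_map; apply: eq_count => x /=.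
by rewrite !pf_val.
Qed.

Lemma pf_cast a b (e : a = b) (s : {perm 'I_a}) k : pf (cast_perm e s) k = pf s k.
Proof. by case: b / e; rewrite cast_perm_id. Qed.

Lemma pf_ct j (s : {perm 'I_j}) k : (k < j.-1)%N ->
  pf (ct s) k = (if pf s k == j.-1 then pf s j.-1 else pf s k).
Proof.
case: j s => [|j] s //= hk.
have -> : k = val (Ordinal hk) by [].
rewrite pf_val /ct_succ permE ct_fun_val.
have -> : widen_ord (leqnSn j) (Ordinal hk) = Ordinal (leqW hk) by apply: val_inj.
rewrite (_ : pf s (val (Ordinal hk)) = val (s (Ordinal (leqW hk)))); last first.
  exact: (pf_val s (Ordinal (leqW hk))).
rewrite (_ : pf s j = val (s ord_max)); last exact: (pf_val s ord_max).
rewrite /ct_aux permM /=.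
case: tpermP => [/perm_inj/(congr1 val) /= E|->|/eqP h1 /eqP h2].
- by exfalso; have := hk; rewrite E ltnn.
- by rewrite eqxx.
- by move: h2; rewrite -val_eqE /= => /negbTE ->.
Qed.

Lemma pf_del n' (s : {perm 'I_n'.+1}) (z : 'I_n'.+1) k : (k < n'.+1)%N ->
  pf (del z s) k = if k == z then val z else if pf s k == z then pf s z else pf s k.
Proof.
move=> hk; have -> : k = val (Ordinal hk) by [].
rewrite !pf_val /del permM.
case: tpermP => [/perm_inj ->|E|/eqP h1 /eqP h2].
- by rewrite eqxx.
- case: (eqVneq (Ordinal hk) z) => [E2|E2].
    by rewrite E2 eqxx; rewrite E2 in E; rewrite E.
  have -> : (Ordinal hk == z :> nat) = false by apply/negbTE; rewrite val_eqE.
  by rewrite E eqxx.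
- have -> : (Ordinal hk == z :> nat) = false.
    apply/negbTE; rewrite val_eqE; apply: contra h1 => /eqP ->; exact: eqxx.
  by have -> : (s (Ordinal hk) == z :> nat) = false by apply/negbTE; rewrite val_eqE.
Qed.

Definition zsm n' m : seq 'I_n'.+1 := [seq inord (n' - i) | i <- iota 0 m].

Lemma zsmS n' m : zsm n' m.+1 = rcons (zsm n' m) (inord (n' - m)).
Proof. by rewrite /zsm -[m.+1]addn1 iotaD map_cat /= cats1. Qed.

Lemma DlS n' m (s : {perm 'I_n'.+1}) :
  Dl (zsm n' m.+1) s = del (inord (n' - m)) (Dl (zsm n' m) s).
Proof. by rewrite zsmS /Dl -cats1 foldl_cat. Qed.

Lemma ctm_Dl n' m (s : {perm 'I_n'.+1}) : (m <= n'.+1)%N ->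
  (forall k, (k < n'.+1 - m)%N -> pf (ctm m s) k = pf (Dl (zsm n' m) s) k) /\
  (forall k, (n'.+1 - m <= k)%N -> pf (Dl (zsm n' m) s) k = k).
Proof.
elim: m => [|m IH] hm.
  split => k hk; first by rewrite /= pf_cast.
  by rewrite pf_ge // -(subn0 n'.+1).
have [IHa IHb] := IH (ltnW hm).
set D := Dl (zsm n' m) s.
set z : 'I_n'.+1 := inord (n' - m).
have vz : val z = (n' - m)%N by rewrite /z /= inordK // ltnS leq_subr.
rewrite DlS -/D -/z; split => k hk.
- rewrite /= pf_cast pf_ct; last by rewrite subnS in hk.
  have e1 : (n'.+1 - m).-1 = (n' - m)%N by lia.
  rewrite e1 !IHa; [|lia|lia].
  rewrite pf_del; last by lia.
  have -> : (k == z :> nat) = false by rewrite vz; apply/negbTE; lia.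
  by rewrite vz.
- case: (ltnP k n'.+1) => hkn; last by rewrite pf_ge.
  rewrite pf_del //.
  case: (eqVneq (k : nat) (val z)) => [->|kz] //.
  rewrite IHb; last by move: kz; rewrite vz; lia.
  by rewrite (negbTE kz).
Qed.

Lemma hd_ctm n' m (s t : {perm 'I_n'.+1}) : (m <= n'.+1)%N ->
  hd (ctm m s) (ctm m t) = hd (Dl (zsm n' m) s) (Dl (zsm n' m) t).
Proof.
move=> hm; have [As Bs] := ctm_Dl s hm; have [At Bt] := ctm_Dl t hm.
rewrite !hd_count.
have -> : iota 0 n'.+1 = iota 0 (n'.+1 - m) ++ iota (n'.+1 - m) m.
  by rewrite -iotaD subnK.
rewrite count_cat.
rewrite (@eq_in_count _ _ pred0 (iota (n'.+1 - m) m)); last first.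
  by move=> k; rewrite mem_iota => /andP[h _]; rewrite Bs // Bt // eqxx.
rewrite count_pred0 addn0; apply: eq_in_count => k.
by rewrite mem_iota add0n => /andP[_ h]; rewrite As // At.
Qed.

Lemma bigmin_le_seq (I : eqType) (r : seq I) (x : nat) (P : pred I) (F : I -> nat) j :
  j \in r -> P j -> (\big[minn/x]_(i <- r | P i) F i <= F j)%N.
Proof.
elim: r => // a r IH; rewrite inE big_cons => /orP[/eqP <- ->|jr Pj].
  exact: geq_minl.
case: ifP => _; last exact: IH.
by apply: leq_trans (geq_minr _ _) _; apply: IH.
Qed.

Lemma bigmin_le_fin (I : finType) (x : nat) (P : pred I) (F : I -> nat) j :
  P j -> (\big[minn/x]_(i | P i) F i <= F j)%N.
Proof. by apply: bigmin_le_seq; rewrite mem_index_enum. Qed.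

Lemma bigmin_ge (I : Type) (r : seq I) (x L : nat) (P : pred I) (F : I -> nat) :
  (L <= x)%N -> (forall i, P i -> L <= F i)%N -> (L <= \big[minn/x]_(i <- r | P i) F i)%N.
Proof.
move=> hx hF; apply: (big_ind (fun v => L <= v)%N) => //.
by move=> a b ha hb; rewrite leq_min ha hb.
Qed.

Lemma hd_ss n (s : {perm 'I_n}) : hd s s = 0%N.
Proof.
rewrite /hd; apply/eqP; rewrite cards_eq0; apply/eqP/setP => x.
by rewrite !inE eqxx.
Qed.

Lemma hd_le n (s t : {perm 'I_n}) : (hd s t <= n)%N.
Proof. by rewrite /hd; apply: leq_trans (max_card _) _; rewrite card_ord. Qed.

Unset Implicit Arguments.

Theorem corollary5p3 (n : nat) (P : {set {perm 'I_n}}) (d m : nat) :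
  P != set0 ->
  hdP P = d ->
  (1 <= m <= n.-1)%N ->
  (forall s t, s \in P -> t \in P -> forall x : 'I_n,
      ~~ [&& odd #|porbit (s^-1 * t) x|, (3 <= #|porbit (s^-1 * t) x|)%N
           & (#|porbit (s^-1 * t) x| <= 2 * m + 1)%N]) ->
  (d - 2 * m <= hdP (ctm_set m P))%N /\
  ((2 * m < d)%N -> #|ctm_set m P| = #|P|).
Proof.
case: n P => [|n'] P.
  by move=> _ _ /andP[h1 h2]; exfalso; move: h1 h2; rewrite /=; lia.
move=> Pne hP /andP[m1 mn] hyp.
have key : forall s t, s \in P -> t \in P ->
    (hd s t <= hd (ctm m s) (ctm m t) + 2 * m)%N.
  move=> s t sP tP; rewrite hd_ctm; last by move: mn => /=; lia.
  have := @pair_bound n'.+1 (zsm n' m) s t; rewrite size_map size_iota; apply.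
  by move=> x; apply: hyp.
have dn : (d <= n'.+1)%N.
  rewrite -hP /hdP; apply: (big_ind (fun v => v <= n'.+1)%N) => //.
    by move=> a b ha _; apply: leq_trans (geq_minl _ _) ha.
  move=> s _; apply: (big_ind (fun v => v <= n'.+1)%N) => //.
    by move=> a b ha _; apply: leq_trans (geq_minl _ _) ha.
  by move=> t _; apply: hd_le.
have dpair : forall s t, s \in P -> t \in P -> t != s -> (d <= hd s t)%N.
  move=> s t sP tP ts; rewrite -hP /hdP.
  apply: leq_trans (bigmin_le_fin _ _ sP) _.
  by apply: bigmin_le_fin; rewrite tP ts.
split.
- rewrite /hdP; apply: bigmin_ge; first by lia.
  move=> s' /imsetP[s sP ->]; apply: bigmin_ge; first by lia.
  move=> t' /andP[/imsetP[t tP ->] nts].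
  have ts : t != s by apply: contraNneq nts => ->.
  have := dpair s t sP tP ts; have := key s t sP tP; lia.
- move=> hd2; rewrite /ctm_set card_in_imset // => s t sP tP E.
  apply/eqP; apply/negPn/negP => st.
  have := dpair t s tP sP st; have := key t s tP sP; rewrite E hd_ss; lia.
Qed.
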